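(* Even for two teams and nonnegative-value players, there does not necessarily exist an allocation that is both balanced and individually stable.
   Context: Setting: teams $T=[n]$, players $P=\{p_1,\dots,p_m\}$. Each player $p$ has a complete, transitive weak preference $\succsim_p$ over $T$ (strict part $\succ_p$). Each team $i$ has an additive valuation $v_i:2^P\to\mathbb{R}$, $v_i(S)=\sum_{p\in S}v_i(p)$; nonnegative-value players means $v_i(p)\ge 0$ for all $i,p$. An allocation $A=(A_1,\dots,A_n)$ is an ordered partition of $P$ into $n$ (possibly empty) parts. $A$ is balanced if $\big||A_i|-|A_j|\big|\le1$ for all $i,j$. Given $A$, a deviation of a player $p\in A_i$ to another team $j$ (moving $p$ from $A_i$ to $A_j$) is a beneficial deviation if $j\succ_p i$, $v_i(A_i\setminus\{p\})\ge v_i(A_i)$ and $v_j(A_j\cup\{p\})\ge v_j(A_j)$. $A$ is individually stable if it admits no beneficial deviation. *)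

(* Defs.v *)
From mathcomp Require Import all_boot all_order all_algebra.
Set Implicit Arguments. Unset Strict Implicit. Unset Printing Implicit Defensive.
Import Order.TTheory GRing.Theory Num.Theory.
Local Open Scope ring_scope.

(* Teams are 'I_n, players are 'I_m.
   A player's preference is a boolean relation [pref i j] meaning i ≿_p j. *)
Definition complete_pref (n : nat) (pref : 'I_n -> 'I_n -> bool) : Prop :=
  forall i j, pref i j || pref j i.
Definition transitive_pref (n : nat) (pref : 'I_n -> 'I_n -> bool) : Prop :=
  forall i j k, pref i j -> pref j k -> pref i k.
Definition weak_order (n : nat) (pref : 'I_n -> 'I_n -> bool) : Prop :=
  complete_pref pref /\ transitive_pref pref.

Definition spref (n : nat) (pref : 'I_n -> 'I_n -> bool) (i j : 'I_n) : bool :=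
  pref i j && ~~ pref j i.

Definition valuation (R : numDomainType) (n m : nat)
  (v : 'I_n -> 'I_m -> R) (i : 'I_n) (S : {set 'I_m}) : R :=
  \sum_(p in S) v i p.

(* An allocation (ordered partition of players into n possibly empty parts)
   is represented by the map sending each player to its team. *)
Definition allocation (n m : nat) := {ffun 'I_m -> 'I_n}.

Definition part (n m : nat) (A : allocation n m) (i : 'I_n) : {set 'I_m} :=
  [set p | A p == i].

Definition balanced (n m : nat) (A : allocation n m) : Prop :=
  forall i j : 'I_n, (#|part A i| <= #|part A j| + 1)%N.

Definition beneficial_deviation (R : numDomainType) (n m : nat)
  (pref : 'I_m -> 'I_n -> 'I_n -> bool) (v : 'I_n -> 'I_m -> R)
  (A : allocation n m) (p : 'I_m) (j : 'I_n) : Prop :=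
  [/\ spref (pref p) j (A p),
      valuation v (A p) (part A (A p)) <= valuation v (A p) (part A (A p) :\ p)
    & valuation v j (part A j) <= valuation v j (p |: part A j)].

Definition individually_stable (R : numDomainType) (n m : nat)
  (pref : 'I_m -> 'I_n -> 'I_n -> bool) (v : 'I_n -> 'I_m -> R)
  (A : allocation n m) : Prop :=
  forall p j, ~ beneficial_deviation pref v A p j.

(* Main.v *)
Require Import Defs.
From mathcomp Require Import all_boot all_order all_algebra.
Import Order.TTheory GRing.Theory Num.Theory.
Local Open Scope ring_scope.

Lemma ord2_ne1 (i : 'I_2) : i != 1%R -> i = 0%R.
Proof. by case: i => [[|[|k]] Hk] //= _; apply/val_inj. Qed.

Theorem proposition4 (R : realFieldType) :
  exists (m : nat) (pref : 'I_m -> 'I_2 -> 'I_2 -> bool) (v : 'I_2 -> 'I_m -> R),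
    [/\ forall p, weak_order (pref p),
        forall i p, 0 <= v i p
      & forall A : allocation 2 m,
          ~ (balanced A /\ individually_stable pref v A)].
Proof.
exists 2%N, (fun _ (i j : 'I_2) => (val i <= val j)%N), (fun _ _ => 0).
split.
- move=> p; split.
  + by move=> i j; apply: leq_total.
  + by move=> i j k; apply: leq_trans.
- by [].
- move=> A [Hb Hs].
  case: (pickP (fun p => A p == 1%R)) => [p /eqP Hp|Hn].
    apply: (Hs p 0%R); split.
    + by rewrite /spref Hp.
    + by rewrite /valuation !big1.
    + by rewrite /valuation !big1.
  have H0 : part A 0%R = setT.
    apply/setP => p; rewrite !inE; apply/eqP; apply: ord2_ne1.
    by rewrite Hn.
  have := Hb 0%R 1%R.
  have H1 : part A 1%R = set0.
    by apply/setP => p; rewrite !inE Hn.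
  by rewrite H0 H1 cardsT cards0 card_ord.
Qed.
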